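(* Let $t\ge 3$ and let $\mathcal{A}=\{A_1,\ldots,A_\alpha\}$ be a nontrivial clutter on $E_t=\{1,\ldots,t\}$. Then (i) $\boldsymbol{\gamma}(\mathcal{A}^{\triangledown})=\mathrm{T}^{(+)}_{2^t}-\prod^{\ast}_{i\in[\alpha]}\Bigl(\mathrm{T}^{(+)}_{2^t}-\prod^{\ast}_{a\in A_i}\tfrac12\bigl(\mathrm{T}^{(+)}_{2^t}-\boldsymbol{x}(\boldsymbol{\mathfrak{a}}(a))\cdot\mathbf{M}\bigr)\Bigr)$; (ii) $\boldsymbol{\gamma}(\mathfrak{B}(\mathcal{A})^{\triangledown})=\Bigl(\prod^{\ast}_{i\in[\alpha]}\Bigl(\mathrm{T}^{(+)}_{2^t}-\prod^{\ast}_{a\in A_i}\tfrac12\bigl(\mathrm{T}^{(+)}_{2^t}-\boldsymbol{x}(\boldsymbol{\mathfrak{a}}(a))\cdot\mathbf{M}\bigr)\Bigr)\Bigr)\cdot\overline{\mathbf{U}}(2^t)$.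
   Context: A clutter on $E_t$ is a family of subsets of $E_t$ none of which contains another; nontrivial means neither the empty family nor $\{\emptyset\}$. $\mathcal{C}^{\triangledown}:=\{D\subseteq E_t: D\supseteq C\text{ for some }C\in\mathcal{C}\}$; the blocker $\mathfrak{B}(\mathcal{A})$ is the family of inclusion-minimal sets meeting every member of $\mathcal{A}$. Order the $2^t$ subsets of $E_t$ by increasing cardinality, lexicographically within equal cardinality; $\boldsymbol{\gamma}(\mathcal{F})\in\{0,1\}^{2^t}$ has $k$-th entry $1$ iff the $k$-th subset lies in $\mathcal{F}$; $T_{\mathcal{F}}:=\mathrm{T}^{(+)}_{2^t}-2\boldsymbol{\gamma}(\mathcal{F})$, with $\mathrm{T}^{(+)}_{2^t}$ the all-ones row vector. For $a\in E_t$, $\boldsymbol{\mathfrak{a}}(a):=T_{\{\{a\}\}^{\triangledown}}$ (characteristic tope of the family of all subsets containing $a$). $\mathbf{M}$ is the $2^t\times 2^t$ matrix whose rows are $R^0,\ldots,R^{2^t-1}$, where $R^0:=\mathrm{T}^{(+)}_{2^t}$ and $R^s$ ($1\le s\le 2^t-1$) has entries $-1$ in positions $1,\ldots,s$ and $1$ elsewhere; for $T\in\{1,-1\}^{2^t}$, $\boldsymbol{x}(T):=T\mathbf{M}^{-1}$ (the unique vector with $T=\boldsymbol{x}(T)\mathbf{M}$). $\prod^{\ast}$ is the componentwise product; $\overline{\mathbf{U}}(2^t)$ is the backward identity matrix of order $2^t$ ($(i,j)$ entry $\delta_{i+j,2^t+1}$). *)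

(* Defs.v *)
From mathcomp Require Import all_boot all_order all_algebra.
Set Implicit Arguments. Unset Strict Implicit. Unset Printing Implicit Defensive.
Import Order.TTheory GRing.Theory Num.Theory.
Local Open Scope ring_scope.

(* E_t = {1,...,t} is modelled by 'I_t = {0,...,t-1} (order-preserving shift). *)

Fixpoint lexlt (s1 s2 : seq nat) : bool :=
  match s1, s2 with
  | [::], [::] => false
  | [::], _ :: _ => true
  | _ :: _, [::] => false
  | x :: s, y :: s' => (x < y)%N || ((x == y) && lexlt s s')
  end.

Definition elems (t : nat) (A : {set 'I_t}) : seq nat :=
  sort leq [seq val i | i <- enum A].

Definition subset_le (t : nat) (A B : {set 'I_t}) : bool :=
  (#|A| < #|B|)%N || ((#|A| == #|B|) && ~~ lexlt (elems B) (elems A)).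

Definition subsets_ordered (t : nat) : seq {set 'I_t} :=
  sort (@subset_le t) (enum [set: {set 'I_t}]).

Definition kth_subset (t : nat) (k : nat) : {set 'I_t} :=
  nth set0 (subsets_ordered t) k.

Definition Tplus (R : nzRingType) (t : nat) : 'rV[R]_(2 ^ t) := const_mx 1.

Definition gamma (R : nzRingType) (t : nat) (F : {set {set 'I_t}}) : 'rV[R]_(2 ^ t) :=
  \row_(k < 2 ^ t) (kth_subset t k \in F)%:R.

Definition tope (R : nzRingType) (t : nat) (F : {set {set 'I_t}}) : 'rV[R]_(2 ^ t) :=
  Tplus R t - 2%:R *: gamma R F.

Definition upclos (t : nat) (C : {set {set 'I_t}}) : {set {set 'I_t}} :=
  [set D : {set 'I_t} | [exists X in C, X \subset D]].

Definition blocker (t : nat) (A : {set {set 'I_t}}) : {set {set 'I_t}} :=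
  [set B : {set 'I_t} | minset (fun X : {set 'I_t} => [forall C in A, X :&: C != set0]) B].

Definition is_clutter (t : nat) (A : {set {set 'I_t}}) : Prop :=
  forall X Y, X \in A -> Y \in A -> X \subset Y -> X = Y.

Definition nontrivial_clutter (t : nat) (A : {set {set 'I_t}}) : Prop :=
  is_clutter A /\ A != set0 /\ A != [set set0].

Definition frak_a (R : nzRingType) (t : nat) (a : 'I_t) : 'rV[R]_(2 ^ t) :=
  tope R (upclos [set [set a]]).

(* the matrix M: row s has -1 in positions 1..s (1-indexed), 1 elsewhere;
   0-indexed: M i j = -1 iff j < i *)
Definition Mmat (R : nzRingType) (t : nat) : 'M[R]_(2 ^ t) :=
  \matrix_(i < 2 ^ t, j < 2 ^ t) (if (j < i)%N then -1 else 1).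

Definition xvec (R : fieldType) (t : nat) (T : 'rV[R]_(2 ^ t)) : 'rV[R]_(2 ^ t) :=
  T *m invmx (Mmat R t).

(* backward identity matrix: (i,j) entry delta_{i+j, 2^t+1} (1-indexed) *)
Definition Ubar (R : nzRingType) (t : nat) : 'M[R]_(2 ^ t) :=
  \matrix_(i < 2 ^ t, j < 2 ^ t) ((i + j)%N == (2 ^ t).-1)%:R.

Definition cprod (R : comNzRingType) (n : nat) (I : finType) (P : {pred I})
  (F : I -> 'rV[R]_n) : 'rV[R]_n :=
  \row_(k < n) \prod_(i in P) F i 0 k.

Definition Pexpr (R : fieldType) (t : nat) (A : {set {set 'I_t}}) : 'rV[R]_(2 ^ t) :=
  cprod (mem A) (fun Ai : {set 'I_t} =>
    Tplus R t - cprod (mem Ai) (fun a : 'I_t =>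
      (2%:R)^-1 *: (Tplus R t - xvec (frak_a R a) *m Mmat R t))).

(* Main.v *)
Require Import Defs.
From mathcomp Require Import all_boot all_order all_algebra.
Import Order.TTheory GRing.Theory Num.Theory.
Set Implicit Arguments. Unset Strict Implicit. Unset Printing Implicit Defensive.

Lemma lexlt_irr s : lexlt s s = false.
Proof. by elim: s => //= x s ->; rewrite ltnn eqxx. Qed.

Lemma lexlt_trans a b c : lexlt a b -> lexlt b c -> lexlt a c.
Proof.
elim: a b c => [|x a IH] [|y b] [|z c] //=.
case/orP=> [xy|/andP[/eqP<- ab]]; case/orP=> [yz|/andP[/eqP<- bc]].
- by rewrite (ltn_trans xy yz).
- by rewrite xy.
- by rewrite yz.
- by rewrite eqxx (IH _ _ ab bc) orbT.
Qed.

Lemma lexlt_total a b : a != b -> lexlt a b || lexlt b a.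
Proof.
elim: a b => [|x a IH] [|y b] //=.
case: (ltngtP x y) => //= exy.
subst y; rewrite ?eqxx ?ltnn /= => nab; apply: IH; apply: contra nab => /eqP ->.
by [].
Qed.

Definition W (s1 s2 : seq nat) :=
  exists m, [/\ m \in s1, m \notin s2 & forall x, x < m -> (x \in s1) = (x \in s2)].

Lemma lexlt_W s1 s2 : sorted ltn s1 -> sorted ltn s2 -> size s1 = size s2 ->
  lexlt s1 s2 -> W s1 s2.
Proof.
elim: s1 s2 => [|x a IH] [|y b] //= sa sb [] sz.
have allA := order_path_min ltn_trans sa.
have allB := order_path_min ltn_trans sb.
case/orP=> [xy|/andP[/eqP exy ab]].
  exists x; split.
  - by rewrite inE eqxx.
  - rewrite inE negb_or neq_ltn xy /=; apply/negP => xb.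
    by move/allP: allB => /(_ _ xb); rewrite ltnNge ltnW.
  - move=> z zx; rewrite !inE.
    have -> : (z == x) = false by rewrite ltn_eqF.
    have -> : (z == y) = false by rewrite ltn_eqF // (ltn_trans zx xy).
    apply/idP/idP => zin.
    + by move/allP: allA => /(_ _ zin) /(ltn_trans zx); rewrite ltnn.
    + by move/allP: allB => /(_ _ zin) /(ltn_trans (ltn_trans zx xy)); rewrite ltnn.
subst y.
have [m [ma mb mx]] := IH b (path_sorted sa) (path_sorted sb) sz ab.
have xm : x < m by move/allP: allA => /(_ _ ma).
exists m; split.
- by rewrite inE ma orbT.
- by rewrite inE negb_or mb andbT gtn_eqF.
- by move=> z zm; rewrite !inE mx.
Qed.

Lemma W_asym a b : W a b -> W b a -> False.
Proof.
move=> [m1 [m1a m1b h1]] [m2 [m2b m2a h2]].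
case: (ltngtP m1 m2) => c.
- by move: (h2 _ c); rewrite m1a (negbTE m1b).
- by move: (h1 _ c); rewrite m2b (negbTE m2a).
- by subst m2; rewrite m1a in m2a.
Qed.

Lemma W_lexlt a b : sorted ltn a -> sorted ltn b -> size a = size b ->
  W a b -> lexlt a b.
Proof.
move=> sa sb sz w.
have nab : a != b.
  by apply/eqP => e; subst b; case: w => m [h1 h2 _]; rewrite h1 in h2.
case/orP: (lexlt_total nab) => // ba.
by case: (W_asym w (lexlt_W sb sa (esym sz) ba)).
Qed.

Section Sets.
Variable t : nat.

Lemma elems_sorted (A : {set 'I_t}) : sorted ltn (elems A).
Proof.
rewrite ltn_sorted_uniq_leq sort_uniq sort_sorted ?andbT; last exact: leq_total.
by rewrite map_inj_uniq ?enum_uniq //; apply: val_inj.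
Qed.

Lemma mem_elems (A : {set 'I_t}) (i : 'I_t) : (val i \in elems A) = (i \in A).
Proof.
rewrite /elems mem_sort; apply/mapP/idP => [[j]|iA].
  by rewrite mem_enum => jA /val_inj ->.
by exists i; rewrite ?mem_enum.
Qed.

Lemma mem_elems_big (A : {set 'I_t}) m : t <= m -> (m \in elems A) = false.
Proof.
move=> tm; rewrite /elems mem_sort; apply/mapP => -[j _ e].
by move: (ltn_ord j); rewrite -e ltnNge tm.
Qed.

Lemma size_elems (A : {set 'I_t}) : size (elems A) = #|A|.
Proof. by rewrite /elems size_sort size_map cardE. Qed.

Lemma elems_inj : injective (@elems t).
Proof. by move=> A B e; apply/setP => i; rewrite -!mem_elems e. Qed.

Lemma W_compl (A B : {set 'I_t}) : W (elems A) (elems B) -> W (elems (~: B)) (elems (~: A)).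
Proof.
move=> [m [ma mb h]].
have mt : m < t by rewrite ltnNge; apply/negP => /(mem_elems_big A); rewrite ma.
exists m; split.
- by rewrite (mem_elems _ (Ordinal mt)) inE -(mem_elems _ (Ordinal mt)).
- by rewrite (mem_elems _ (Ordinal mt)) inE -(mem_elems _ (Ordinal mt)) ma.
- move=> x xm; have xt := ltn_trans xm mt.
  by rewrite !(mem_elems _ (Ordinal xt)) !inE -!(mem_elems _ (Ordinal xt)) h.
Qed.

Lemma card_compl (A : {set 'I_t}) : #|~: A| = t - #|A|.
Proof. transitivity (#|A| + #|~: A| - #|A|); first by rewrite addKn. by rewrite cardsC card_ord. Qed.

Lemma subset_le_total : total (@subset_le t).
Proof.
move=> A B; rewrite /subset_le.
case: (ltngtP #|A| #|B|) => //= c; rewrite ?c ?eqxx /=.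
by rewrite -negb_and; apply/negP => /andP[h1 h2]; move: (lexlt_trans h1 h2); rewrite lexlt_irr.
Qed.

Lemma subset_le_trans : transitive (@subset_le t).
Proof.
move=> B A C; rewrite /subset_le.
case/orP=> [ab|/andP[/eqP ab nba]]; case/orP=> [bc|/andP[/eqP bc ncb]].
- by rewrite (ltn_trans ab bc).
- by rewrite -bc ab.
- by rewrite ab bc.
rewrite ab bc eqxx ltnn /=; apply/negP => ca.
have [eAB|nAB] := eqVneq (elems A) (elems B).
  by rewrite -eAB ca in ncb.
case/orP: (lexlt_total nAB) => h; first by rewrite (lexlt_trans ca h) in ncb.
by rewrite h in nba.
Qed.

Lemma subset_le_anti : antisymmetric (@subset_le t).
Proof.
move=> A B /andP[]; rewrite /subset_le.
case: (ltngtP #|A| #|B|) => //= _ h1 h2.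
apply: elems_inj; apply/eqP; apply: contraT => ne.
by case/orP: (lexlt_total ne) => h; [rewrite h in h2 | rewrite h in h1].
Qed.

Lemma subset_le_compl (A B : {set 'I_t}) : subset_le A B -> subset_le (~: B) (~: A).
Proof.
rewrite /subset_le !card_compl.
case/orP=> [ab|/andP[/eqP ab nba]].
  apply/orP; left; rewrite ltn_sub2l //; apply: leq_trans ab _.
  by have := max_card (mem B); rewrite card_ord.
rewrite ab eqxx ltnn /=; apply/negP => h.
have sz : size (elems (~: A)) = size (elems (~: B)) by rewrite !size_elems !card_compl ab.
have := W_compl (lexlt_W (elems_sorted _) (elems_sorted _) sz h).
rewrite !setCK => w.
have sz2 : size (elems B) = size (elems A) by rewrite !size_elems ab.
by rewrite (W_lexlt (elems_sorted _) (elems_sorted _) sz2 w) in nba.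
Qed.

Lemma size_so : size (subsets_ordered t) = 2 ^ t.
Proof.
rewrite /subsets_ordered size_sort -cardE -powersetT card_powerset cardsT card_ord //.
Qed.

Lemma so_compl : rev (map (@setC _) (subsets_ordered t)) = subsets_ordered t.
Proof.
apply: (sorted_eq subset_le_trans subset_le_anti).
- rewrite rev_sorted; rewrite sorted_map.
  apply: sub_sorted (sort_sorted subset_le_total _) => A B /=.
  exact: subset_le_compl.
- exact: sort_sorted subset_le_total _.
apply: uniq_perm.
- by rewrite rev_uniq map_inj_uniq ?sort_uniq ?enum_uniq //; apply: setC_inj.
- by rewrite sort_uniq enum_uniq.
move=> X; rewrite mem_rev mem_sort mem_enum inE; apply/mapP.
by exists (~: X); rewrite ?setCK // mem_sort mem_enum inE.
Qed.

Lemma kth_compl k : k < 2 ^ t -> kth_subset t (2 ^ t - k.+1) = ~: kth_subset t k.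
Proof.
move=> kn; rewrite /kth_subset -{2}so_compl nth_rev; last by rewrite size_map size_so.
rewrite size_map size_so (nth_map set0) ?setCK //.
by rewrite size_so -subSn // subSS leq_subr.
Qed.
End Sets.

From mathcomp Require Import zify.
Local Open Scope ring_scope.

Lemma sum_delta (R : nzRingType) n m (f : nat -> R) :
  \sum_(j < n) (val j == m)%:R * f (val j) = (m < n)%:R * f m.
Proof.
rewrite -(big_mkord xpredT (fun j => (j == m)%:R * f j)).
elim: n => [|n IH]; first by rewrite big_nil ltn0 mul0r.
rewrite big_nat_recr //= IH ltnS.
by case: (ltngtP m n) => c; rewrite /= ?mul0r ?addr0 ?add0r // c.
Qed.

Section Alg.
Variable R : numFieldType.
Variable t : nat.
Local Notation n := (2 ^ t)%N.

Definition Mf (k j : nat) : R := if (k < j)%N then -1 else 1.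

Definition Nmat : 'M[R]_n :=
  \matrix_(i < n, j < n)
    (if (i.+1 < n)%N then 2^-1 * ((val j == val i)%:R * 1 - (val j == i.+1)%:R * 1)
     else 2^-1 * ((val j == 0%N)%:R * 1 + (val j == n.-1)%:R * 1)).

Lemma two_neq0 : (2%:R : R) != 0.
Proof. by rewrite pnatr_eq0. Qed.

Lemma NM : Nmat *m Mmat R t = 1%:M.
Proof.
apply/matrixP => i k; rewrite !mxE.
have e : forall j : 'I_n, Mmat R t j k = Mf k j by move=> j; rewrite mxE.
under eq_bigr => j _ do rewrite e mxE.
have n0 : (0 < n)%N by rewrite expn_gt0.
have [ilt|ilt] := boolP (i.+1 < n)%N.
  under eq_bigr => j _ do rewrite ?ilt /= !mulr1 -mulrA mulrBl.
  rewrite -mulr_sumr sumrB !(@sum_delta _ _ _ (fun j => Mf k j)) ltn_ord ilt /Mf.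
  rewrite ltnS; case: (ltngtP k i) => c.
  - rewrite subrr mulr0 (_ : (i == k) = false) //.
    by apply/eqP => ee; subst; rewrite ltnn in c.
  - rewrite subrr mulr0 (_ : (i == k) = false) //.
    by apply/eqP => ee; subst; rewrite ltnn in c.
  - move/val_inj: c => c; subst; rewrite eqxx /= !mul1r opprK -mulr2n mulVf //.
    by rewrite -(mulr_natl 1) mulr1 two_neq0.
under eq_bigr => j _ do rewrite ?(negbTE ilt) /= -mulrA mulrDl !mulr1.
rewrite -mulr_sumr big_split /= !(@sum_delta _ _ _ (fun j => Mf k j)) n0 /Mf ltn0.
have -> : n.-1 = val i.
  by change (n.-1 = nat_of_ord i); move: ilt; rewrite -leqNgt => ilt; have := ltn_ord i; lia.
rewrite ltn_ord !mul1r; case: (ltngtP k i) => c.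
- rewrite subrr mulr0 (_ : (i == k) = false) //.
  by apply/eqP => ee; subst; rewrite ltnn in c.
- move: ilt; rewrite -leqNgt => ilt; have := ltn_ord k.
  change (is_true (nat_of_ord i < nat_of_ord k)%N) in c; lia.
- move/val_inj: c => c; subst; rewrite ?ltnn eqxx /= -mulr2n mulVf //.
  by rewrite -(mulr_natl 1) mulr1 two_neq0.
Qed.

Lemma M_unit : Mmat R t \in unitmx.
Proof. by case: (mulmx1_unit NM). Qed.

Lemma xM (T : 'rV[R]_n) : xvec T *m Mmat R t = T.
Proof. by rewrite /xvec -mulmxA mulVmx ?mulmx1 // M_unit. Qed.

Lemma half_entry (a : 'I_t) k :
  (2^-1 *: (Tplus R t - xvec (frak_a R a) *m Mmat R t)) 0 k = (a \in kth_subset t k)%:R.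
Proof.
rewrite xM !mxE /upclos inE.
have -> : [exists X in [set [set a]], X \subset kth_subset t k] = (a \in kth_subset t k).
  apply/existsP/idP => [[X /andP[]]|h].
    by rewrite inE => /eqP ->; rewrite sub1set.
  by exists [set a]; rewrite inE eqxx sub1set.
rewrite opprB addrC subrK -mulr_natl mulrA mulVf ?mul1r //.
by rewrite mulr1 two_neq0.
Qed.

Lemma prod_bool (I : finType) (P : {pred I}) (b : I -> bool) :
  \prod_(i in P) ((b i)%:R : R) = [forall i in P, b i]%:R.
Proof.
case: (boolP [forall i in P, b i]) => h.
  by apply: big1 => i iP; move/forall_inP: h => /(_ _ iP) ->.
move/forall_inPn: h => [i iP nb].
by rewrite (bigD1 i) //= (negbTE nb) mul0r.
Qed.

Lemma Pexpr_entry (A : {set {set 'I_t}}) k :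
  Pexpr R A 0 k = [forall Ai in A, ~~ (Ai \subset kth_subset t k)]%:R.
Proof.
rewrite /Pexpr /cprod mxE -prod_bool; apply: eq_bigr => Ai _.
rewrite !mxE.
under eq_bigr => a _ do rewrite half_entry.
rewrite prod_bool.
have -> : [forall a in Ai, a \in kth_subset t k] = (Ai \subset kth_subset t k).
  by apply/forall_inP/subsetP.
by case: (Ai \subset _); rewrite /= ?subrr ?subr0.
Qed.

Lemma upclos_blocker (A : {set {set 'I_t}}) S :
  (S \in upclos (blocker A)) = [forall C in A, S :&: C != set0].
Proof.
rewrite /upclos inE; apply/existsP/forall_inP.
  move=> [X /andP[]]; rewrite inE => /minsetP[/forall_inP h _] XS C CA.
  apply: contraNneq (h C CA) => e; apply/eqP; apply/eqP; rewrite -subset0.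
  by rewrite -e setSI.
move=> h.
have [X mX XS] := minset_exists (P := fun X => [forall C in A, X :&: C != set0])
  (C := S) (introT forall_inP h).
by exists X; rewrite inE mX XS.
Qed.

End Alg.

Theorem corollary6p6 (R : numFieldType) (t : nat) (A : {set {set 'I_t}}) :
  (3 <= t)%N -> nontrivial_clutter A ->
  gamma R (upclos A) = Tplus R t - Pexpr R A /\
  gamma R (upclos (blocker A)) = Pexpr R A *m Ubar R t.
Proof.
move=> _ _; split.
  apply/rowP => k; have PE := Pexpr_entry R A k.
  rewrite [gamma _ _ _ _]mxE [(Tplus _ _ - _) _ _]mxE [Tplus _ _ _ _]mxE [(- Pexpr _ _) _ _]mxE PE.
  rewrite -negb_exists_in /upclos inE.
  by case: [exists _ in _, _]; rewrite /= ?subrr ?subr0.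
apply/rowP => k; rewrite [gamma _ _ _ _]mxE [(_ *m _) _ _]mxE.
pose f (m : nat) : R := [forall Ai in A, ~~ (Ai \subset kth_subset t m)]%:R.
have n0 : (0 < 2 ^ t)%N by rewrite expn_gt0.
have kn := ltn_ord k.
symmetry; transitivity (\sum_(j < 2 ^ t) (val j == (2 ^ t).-1 - k)%N%:R * f (val j)).
  apply: eq_bigr => j _; rewrite (Pexpr_entry R) [Ubar _ _ _ _]mxE mulrC.
  have jn := ltn_ord j.
  have E : ((nat_of_ord j + nat_of_ord k)%N == (2 ^ t).-1) = (nat_of_ord j == ((2 ^ t).-1 - nat_of_ord k)%N).
    by apply/eqP/eqP; lia.
  by rewrite E.
rewrite (@sum_delta _ _ _ f).
have -> : ((2 ^ t).-1 - k = 2 ^ t - k.+1)%N by lia.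
rewrite /f kth_compl // (_ : (2 ^ t - k.+1 < 2 ^ t)%N = true); last by lia.
rewrite mul1r upclos_blocker; congr (_%:R); congr (nat_of_bool _).
have H (C S : {set 'I_t}) : (~~ (C \subset ~: S)) = (S :&: C != set0).
  by rewrite subsets_disjoint setCK -setI_eq0 setIC.
by apply: eq_forallb_in => C _; rewrite H.
Qed.
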